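(* Let $(S,d)$, $(S',d')$, $(R,d_R)$ be Polish spaces and let $g:S'\times S\to R$ be a (Borel measurable) map that is $K$-Lipschitz in the second variable, i.e. $d_R(g(x,y),g(x,z))\le K\,d(y,z)$ for all $x\in S'$, $y,z\in S$. Let $X$ be an $S'$-valued random variable and $Y,Z$ be $S$-valued random variables such that $X$ is independent of $Y$ and $X$ is independent of $Z$. Then $\rho_P^R(g(X,Y),g(X,Z))\le(1\vee K)\,\rho_P^S(Y,Z)$.
   Context: For a Polish space $(S,d)$ and $\mu,\nu\in\mathcal{P}(S)$, the Prokhorov distance is $\rho_P^S(\mu,\nu)=\inf\{\epsilon>0:\mu(B)\le\nu(B^\epsilon)+\epsilon\text{ for all Borel sets }B\}$, where $B^\epsilon=\{x\in S:d(x,B)<\epsilon\}$. For random variables $U,V$ with values in $S$, $\rho_P^S(U,V)$ means $\rho_P^S(\operatorname{law}(U),\operatorname{law}(V))$. $a\vee b=\max(a,b)$. *)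

(* Defs.v *)
From mathcomp Require Import all_boot all_order all_algebra.
From mathcomp Require Import all_classical all_reals all_analysis.
Set Implicit Arguments. Unset Strict Implicit. Unset Printing Implicit Defensive.
Import Order.TTheory GRing.Theory Num.Theory.
Local Open Scope classical_set_scope.
Local Open Scope ring_scope.

Section MetricDefs.
Context {R : realType} {T : Type}.
Implicit Types (d : T -> T -> R).

Definition is_metric d : Prop :=
  (forall x y, 0 <= d x y) /\ (forall x y, d x y = 0 <-> x = y) /\
  (forall x y, d x y = d y x) /\ (forall x y z, d x z <= d x y + d y z).

Definition dball d (x : T) (r : R) : set T := [set y | d x y < r].
Definition mopen d (U : set T) : Prop :=
  forall x, U x -> exists2 r : R, 0 < r & dball d x r `<=` U.

Definition metric_separable d : Prop :=
  exists D : set T, countable D /\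
    forall x (e : R), 0 < e -> exists2 y, D y & d x y < e.

Definition metric_complete d : Prop :=
  forall u : nat -> T,
    (forall e : R, 0 < e -> exists N, forall m n, (N <= m)%N -> (N <= n)%N ->
        d (u m) (u n) < e) ->
    exists l, forall e : R, 0 < e -> exists N, forall n, (N <= n)%N -> d (u n) l < e.

Definition polish d : Prop := [/\ is_metric d, metric_separable d & metric_complete d].

Definition borel_set d : set (set T) := <<s mopen d >>.

(* B^eps = {x | d(x,B) < eps} = {x | exists y in B, d(x,y) < eps} *)
Definition enlarge d (B : set T) (e : R) : set T :=
  [set x | exists2 y, B y & d x y < e].

Definition prokhorov d (mu nu : set T -> \bar R) : \bar R :=
  ereal_inf [set (e%:E)%E | e in
     [set e : R | 0 < e /\ forall B, borel_set d B ->
        (mu B <= nu (enlarge d B e) + e%:E)%E]].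
End MetricDefs.

Section ProdBorel.
Context {R : realType} {T1 T2 : Type}.
Definition prod_borel (d1 : T1 -> T1 -> R) (d2 : T2 -> T2 -> R) : set (set (T1 * T2)) :=
  <<s [set C | exists A B, [/\ borel_set d1 A, borel_set d2 B & C = A `*` B]] >>.
End ProdBorel.

Section RV.
Context {R : realType} {dO : measure_display} {Omega : measurableType dO}.
Context (P : probability Omega R).

Definition rv_measurable {T : Type} (d : T -> T -> R) (X : Omega -> T) : Prop :=
  forall B, borel_set d B -> measurable (X @^-1` B).

Definition law {T : Type} (X : Omega -> T) : set T -> \bar R :=
  fun B => P (X @^-1` B).

Definition independent_rv {T1 T2 : Type} (d1 : T1 -> T1 -> R) (d2 : T2 -> T2 -> R)
  (X : Omega -> T1) (Y : Omega -> T2) : Prop :=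
  forall A B, borel_set d1 A -> borel_set d2 B ->
    P (X @^-1` A `&` Y @^-1` B) = (P (X @^-1` A) * P (Y @^-1` B))%E.
End RV.

(* Main.v *)
Require Import Defs.
From HB Require Import structures.
From mathcomp Require Import all_boot all_order all_algebra.
From mathcomp Require Import all_classical all_reals all_analysis.
Set Implicit Arguments. Unset Strict Implicit. Unset Printing Implicit Defensive.
Import Order.TTheory GRing.Theory Num.Theory.
Local Open Scope classical_set_scope.
Local Open Scope ring_scope.

Section plaw.
Context {R : realType} {dO} {Omega : measurableType dO} (P : probability Omega R).
Context {d1} {T : measurableType d1} (f : Omega -> T) (mf : measurable_fun setT f).
Definition plaw of measurable_fun setT f := pushforward P f.
Let plaw0 : plaw mf set0 = 0%E.
Proof. by rewrite /plaw /pushforward preimage_set0 measure0. Qed.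
Let plaw_ge0 A : (0 <= plaw mf A)%E.
Proof. exact: measure_ge0. Qed.
Let plaw_sa : semi_sigma_additive (plaw mf).
Proof.
move=> F mF tF mUF; rewrite /plaw /pushforward preimage_bigcup.
apply: measure_semi_sigma_additive.
- by move=> n; rewrite -[X in measurable X]setTI; exact: mf.
- apply/trivIsetP => /= i j _ _ ij; rewrite -preimage_setI.
  by move/trivIsetP : tF => /(_ _ _ _ _ ij) ->//; rewrite preimage_set0.
- by rewrite -preimage_bigcup -[X in measurable X]setTI; exact: mf.
Qed.
HB.instance Definition _ := isMeasure.Build _ _ _ (plaw mf) plaw0 plaw_ge0 plaw_sa.
Let plawT : plaw mf [set: _] = 1%:E.
Proof. by rewrite /plaw /pushforward preimage_setT probability_setT. Qed.
HB.instance Definition _ := Measure_isProbability.Build _ _ _ (plaw mf) plawT.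
End plaw.

Section gen.
Context {R : realType} {dO} {Omega : measurableType dO} (P : probability Omega R).
Context {d1 d2} {T1 : measurableType d1} {T2 : measurableType d2}.
Local Open Scope ereal_scope.

Lemma joint (X : Omega -> T1) (Y : Omega -> T2) (mX : measurable_fun setT X)
  (mY : measurable_fun setT Y)
  (ind : forall A B, measurable A -> measurable B ->
     P (X @^-1` A `&` Y @^-1` B) = P (X @^-1` A) * P (Y @^-1` B))
  (D : set (T1 * T2)) (mD : measurable D) :
  P ((fun w => (X w, Y w)) @^-1` D) = \int[plaw P mX]_x plaw P mY (xsection D x).
Proof.
have mXY : measurable_fun setT (fun w => (X w, Y w)) by exact: measurable_fun_pair.
transitivity (plaw P mXY D) => //.
have := @product_measure_unique _ _ _ _ _ (plaw P mX) (plaw P mY) (plaw P mXY) _ D mD.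
move=> <- //; move=> A B mA mB; exact: ind.
Qed.

Lemma key (X : Omega -> T1) (Y Z : Omega -> T2) (mX : measurable_fun setT X)
  (mY : measurable_fun setT Y) (mZ : measurable_fun setT Z)
  (iXY : forall A B, measurable A -> measurable B ->
     P (X @^-1` A `&` Y @^-1` B) = P (X @^-1` A) * P (Y @^-1` B))
  (iXZ : forall A B, measurable A -> measurable B ->
     P (X @^-1` A `&` Z @^-1` B) = P (X @^-1` A) * P (Z @^-1` B))
  (A D : set (T1 * T2)) (mA : measurable A) (mD : measurable D) (e : R) (e0 : (0 <= e)%R)
  (H : forall x, P (Y @^-1` xsection A x) <= P (Z @^-1` xsection D x) + e%:E) :
  P ((fun w => (X w, Y w)) @^-1` A) <= P ((fun w => (X w, Z w)) @^-1` D) + e%:E.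
Proof.
rewrite (joint mX mY iXY mA) (joint mX mZ iXZ mD).
have mfA := measurable_fun_xsection (plaw P mY) mA.
have mfD := measurable_fun_xsection (plaw P mZ) mD.
apply: (le_trans (@ge0_le_integral _ _ _ (plaw P mX) setT measurableT
   (fun x => plaw P mY (xsection A x)) (fun x => plaw P mZ (xsection D x) + e%:E)
   _ mfA _ (fun x _ => H x))).
- by move=> x _; exact: measure_ge0.
- by apply: emeasurable_funD => //; exact: measurable_cst.
rewrite ge0_integralD //.
rewrite integral_cst //.
rewrite [X in _ * X](_ : _ = 1) ?mule1 //.
rewrite /plaw /pushforward /=; rewrite -(probability_setT P); congr (P _).
Qed.
End gen.
Section inf.
Context {R : realType}.
Lemma inf_scale (I J : set R) (c : R) : 0 < c -> (forall e, I e -> J (c*e)) ->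
  (forall e, J e -> 0 < e) ->
  (ereal_inf (EFin @` J) <= c%:E * ereal_inf (EFin @` I))%E.
Proof.
move=> c0 IJ Jpos.
have Ipos e : I e -> 0 < e by move=> /IJ /Jpos; rewrite pmulr_rgt0.
have u0 : (0 <= ereal_inf (EFin @` I))%E.
  by apply: le_ereal_inf_tmp => _ [e Ie <-]; rewrite lee_fin ltW // Ipos.
case E: (ereal_inf (EFin @` I)) u0 => [r| |] u0.
- apply/lee_addgt0Pr => de de0.
  have : (ereal_inf (EFin @` I) < (r + de / c)%:E)%E.
    by rewrite E lte_fin ltrDl divr_gt0.
  case/ereal_inf_lt => _ [e Ie <-]; rewrite lte_fin => er.
  have h : (ereal_inf (EFin @` J) <= (c*e)%:E)%E.
    by apply: ereal_inf_lbound; exists (c*e) => //; exact: IJ.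
  apply: (le_trans h); rewrite -EFinM -EFinD lee_fin.
  have : c * e <= c * (r + de / c) by rewrite ler_pM2l // ltW.
  by rewrite mulrDr mulrCA divff ?mulr1 // gt_eqF.
- by rewrite gt0_muley ?lte_fin // leey.
- by [].
Qed.
End inf.

Section metric.
Context {R : realType} {T : Type} (dd : T -> T -> R).
Lemma enlarge_open (B : set T) (e : R) : is_metric dd -> mopen dd (enlarge dd B e).
Proof.
move=> [d0 [dE [dC dT]]] x [y By dxy].
exists (e - dd x y); first by rewrite subr_gt0.
move=> z; rewrite /dball /= => dxz; exists y => //.
apply: (le_lt_trans (dT z x y)); rewrite dC; move: dxz; rewrite ltrBrDr.
by rewrite addrC.
Qed.
Lemma enlarge_borel (B : set T) (e : R) : is_metric dd -> borel_set dd (enlarge dd B e).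
Proof. by move=> hm; apply: sub_sigma_algebra; exact: enlarge_open. Qed.
End metric.
Section mainsec.
Context {R : realType} {dO : measure_display} {Omega : measurableType dO}
  (P : probability Omega R)
  {S S' U : Type} (d : S -> S -> R) (d' : S' -> S' -> R) (dU : U -> U -> R)
  (x0 : S') (y0 : S).

Definition Sp : Type := S.
HB.instance Definition _ := gen_eqMixin Sp.
HB.instance Definition _ := gen_choiceMixin Sp.
HB.instance Definition _ := isPointed.Build Sp y0.
Definition S'p : Type := S'.
HB.instance Definition _ := gen_eqMixin S'p.
HB.instance Definition _ := gen_choiceMixin S'p.
HB.instance Definition _ := isPointed.Build S'p x0.
Local Notation Sm := (g_sigma_algebraType (mopen d : set (set Sp))).
Local Notation S'm := (g_sigma_algebraType (mopen d' : set (set S'p))).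

Lemma prod_meas (D : set (S' * S)) : prod_borel d' d D -> measurable (D : set (S'm * Sm)).
Proof.
move=> hD; apply: (smallest_sub (@sigma_algebra_measurable _ (S'm * Sm)%type) _ hD).
by move=> _ [A [B [hA hB ->]]]; exact: measurableX.
Qed.

Lemma main_ineq (hS : is_metric d) (hU : is_metric dU)
  (g : S' * S -> U) (K : R)
  (g_meas : forall C, borel_set dU C -> prod_borel d' d (g @^-1` C))
  (g_lip : forall x y z, dU (g (x, y)) (g (x, z)) <= K * d y z)
  (X : Omega -> S') (Y Z : Omega -> S)
  (hX : rv_measurable d' X) (hY : rv_measurable d Y) (hZ : rv_measurable d Z)
  (iXY : independent_rv P d' d X Y) (iXZ : independent_rv P d' d X Z)
  (e : R) (e0 : 0 < e)
  (he : forall B, borel_set d B -> (law P Y B <= law P Z (enlarge d B e) + e%:E)%E)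
  (C : set U) (hC : borel_set dU C) :
  (law P (fun w => g (X w, Y w)) C <=
     law P (fun w => g (X w, Z w)) (enlarge dU C (Num.max 1 K * e)%R) + (Num.max 1 K * e)%:E)%E.
Proof.
set c := Num.max 1 K.
have c1 : 1 <= c by rewrite le_max lexx.
have c0 : 0 < c by apply: lt_le_trans c1.
have mX : measurable_fun setT (X : Omega -> S'm).
  by move=> _ B mB; rewrite setTI; exact: hX.
have mY : measurable_fun setT (Y : Omega -> Sm).
  by move=> _ B mB; rewrite setTI; exact: hY.
have mZ : measurable_fun setT (Z : Omega -> Sm).
  by move=> _ B mB; rewrite setTI; exact: hZ.
pose A : set (S'm * Sm) := g @^-1` C.
pose D : set (S'm * Sm) := g @^-1` enlarge dU C (c * e).
have mA : measurable A by apply: prod_meas; exact: g_meas.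
have mD : measurable D by apply: prod_meas; apply: g_meas; exact: enlarge_borel.
have := @key R dO Omega P _ _ S'm Sm X Y Z mX mY mZ iXY iXZ A D mA mD e (ltW e0).
move=> /(_ _) h; apply: le_trans (h _) _.
  move=> x.
  have mAx : borel_set d (xsection A x) by exact: (measurable_xsection x mA).
  apply: le_trans (he _ mAx) _.
  rewrite leeD2r // /law le_measure //; rewrite ?inE.
  - by apply: hZ; exact: enlarge_borel.
  - by apply: hZ; exact: (measurable_xsection x mD).
  move=> w [y Ay dzy]; rewrite /xsection /= inE.
  exists (g (x, y)); first by move: Ay; rewrite /xsection /= inE.
  apply: (le_lt_trans (g_lip x (Z w) y)).
  have [dp _] := hS.
  apply: (le_lt_trans (y := c * d (Z w) y)).
    by rewrite ler_wpM2r // /c le_max lexx orbT.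
  by rewrite ltr_pM2l.
by rewrite leeD2l // lee_fin ler_peMl // ltW.
Qed.
End mainsec.
Unset Implicit Arguments.
Set Strict Implicit.
Theorem theorem3p6 (R : realType) (dO : measure_display) (Omega : measurableType dO)
  (P : probability Omega R)
  (S S' U : Type) (d : S -> S -> R) (d' : S' -> S' -> R) (dU : U -> U -> R)
  (hS : polish d) (hS' : polish d') (hU : polish dU)
  (g : S' * S -> U) (K : R)
  (g_meas : forall C, borel_set dU C -> prod_borel d' d (g @^-1` C))
  (g_lip : forall x y z, dU (g (x, y)) (g (x, z)) <= K * d y z)
  (X : Omega -> S') (Y Z : Omega -> S)
  (hX : rv_measurable d' X) (hY : rv_measurable d Y) (hZ : rv_measurable d Z)
  (iXY : independent_rv P d' d X Y) (iXZ : independent_rv P d' d X Z) :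
  (prokhorov dU (law P (fun w => g (X w, Y w))) (law P (fun w => g (X w, Z w)))
   <= (Num.max 1 K)%:E * prokhorov d (law P Y) (law P Z))%E.
Proof.
have x0 : S' := X point.
have y0 : S := Y point.
case: hS => hSm _ _; case: hU => hUm _ _.
rewrite /prokhorov; apply: inf_scale.
- by apply: (@lt_le_trans _ _ 1) => //; rewrite le_max lexx.
- move=> e [e0 he]; split.
    by rewrite mulr_gt0 // (@lt_le_trans _ _ 1) // le_max lexx.
  move=> C hC.
  exact: (@main_ineq _ _ _ P _ _ _ d d' dU x0 y0 hSm hUm g K g_meas g_lip X Y Z
    hX hY hZ iXY iXZ e e0 he C hC).
- by move=> e [].
Qed.
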